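(* Let $\Delta>1$, $D\le n$, integers $e_0,e_1\ge0$, and let $M\in\mathbb{F}_2^{m\times n}$ satisfy: for all $S_1,S_2\subseteq[n]$ with $|S_2|\le|S_1|\le D$, if $|S_1|/|S_2|>\Delta^2$ then $(M\odot\mathbf{v}(S_1),M\odot\mathbf{v}(S_2))$ are $(e_0+e_1,e_0+e_1)$-far. Let $G=(V,\mathcal{E})$ be the undirected graph with $V=\{A\subseteq[n]:|A|\le D\}$ and $(A,B)\in\mathcal{E}$ iff $(M\odot\mathbf{v}(A),M\odot\mathbf{v}(B))$ are $(e_0+e_1,e_0+e_1)$-close. Then for $A,B\in V$: (i) if $(A,B)\in\mathcal{E}$ and $|A\cup B|\le D$, then $(A\cup B,A)\in\mathcal{E}$ and $(A\cup B,B)\in\mathcal{E}$; (ii) if $\frac{|A|}{|B|}\notin\left[\frac{1}{\Delta^2},\Delta^2\right]$, then $(A,B)\notin\mathcal{E}$.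
   Context: Group testing model: $(M\odot\mathbf{x})_i=\bigvee_{j:M_{ij}=1}\mathbf{x}_j$. $[n]=\{1,\dots,n\}$; for $S\subseteq[n]$, $\mathbf{v}(S)$ is the binary vector with support $S$. For $\mathbf{x},\mathbf{y}\in\mathbb{F}_2^m$, $(\mathbf{x},\mathbf{y})$ is $(a,b)$-far iff $|\mathrm{supp}(\mathbf{y})\setminus\mathrm{supp}(\mathbf{x})|>a$ or $|\mathrm{supp}(\mathbf{x})\setminus\mathrm{supp}(\mathbf{y})|>b$, and $(a,b)$-close otherwise. *)

(* Defs.v *)
From mathcomp Require Import all_boot all_order all_algebra.
From mathcomp Require Import reals.
Set Implicit Arguments. Unset Strict Implicit. Unset Printing Implicit Defensive.

(* Group testing over F_2 represented by boolean entries (true = 1).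
   A binary vector of length k is identified with its support {set 'I_k}. *)

Definition vec (n : nat) (S : {set 'I_n}) : 'I_n -> bool := fun j => j \in S.

Definition gt_mul (m n : nat) (M : 'M[bool]_(m, n)) (x : 'I_n -> bool) : 'I_m -> bool :=
  fun i => [exists j, M i j && x j].

Definition supp (k : nat) (x : 'I_k -> bool) : {set 'I_k} := [set i | x i].

Definition far (k : nat) (a b : nat) (x y : 'I_k -> bool) : bool :=
  (a < #|supp y :\: supp x|) || (b < #|supp x :\: supp y|).

Definition close (k : nat) (a b : nat) (x y : 'I_k -> bool) : bool := ~~ far a b x y.

Definition edge (m n : nat) (M : 'M[bool]_(m, n)) (e0 e1 : nat) (A B : {set 'I_n}) : bool :=
  close (e0 + e1) (e0 + e1) (gt_mul M (vec A)) (gt_mul M (vec B)).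

(* Main.v *)
Require Import Defs.
From mathcomp Require Import all_boot all_order all_algebra.
From mathcomp Require Import reals.
From mathcomp Require Import ring lra.
Import Order.TTheory GRing.Theory Num.Theory.
Local Open Scope ring_scope.

Lemma supp_U (m n : nat) (M : 'M[bool]_(m, n)) (A B : {set 'I_n}) :
  supp (gt_mul M (vec (A :|: B))) =
  supp (gt_mul M (vec A)) :|: supp (gt_mul M (vec B)).
Proof.
apply/setP => i; rewrite !inE /gt_mul /vec.
apply/existsP/orP.
- by case=> j /andP [Mij]; rewrite inE => /orP [hA|hB];
    [left|right]; apply/existsP; exists j; rewrite Mij.
- by case=> /existsP [j /andP [Mij hj]]; exists j; rewrite Mij inE hj ?orbT.
Qed.

Lemma far_sym k a (x y : 'I_k -> bool) : far a a x y = far a a y x.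
Proof. by rewrite /far orbC. Qed.

Lemma cmp_le (R : realType) (Delta : R) (a b : nat) :
  1 < Delta -> (a%:R > Delta ^+ 2 * b%:R :> R) -> (b <= a)%N.
Proof.
move=> hD h; rewrite leqNgt; apply/negP => hab.
have hb : (a%:R < b%:R :> R) by rewrite ltr_nat.
have b0 : (0 <= b%:R :> R) by apply: ler0n.
have : b%:R <= Delta ^+ 2 * b%:R :> R.
  by apply: ler_peMl => //; apply: exprn_ege1; exact: ltW hD.
lra.
Qed.

Theorem lemma2 (R : realType) (Delta : R) (m n D e0 e1 : nat)
  (M : 'M[bool]_(m, n)) :
  1 < Delta -> (D <= n)%N ->
  (forall S1 S2 : {set 'I_n}, (#|S2| <= #|S1|)%N -> (#|S1| <= D)%N ->
     (#|S1|%:R > Delta ^+ 2 * #|S2|%:R :> R) ->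
     far (e0 + e1) (e0 + e1) (gt_mul M (vec S1)) (gt_mul M (vec S2))) ->
  forall A B : {set 'I_n}, (#|A| <= D)%N -> (#|B| <= D)%N ->
    (edge M e0 e1 A B -> (#|A :|: B| <= D)%N ->
       edge M e0 e1 (A :|: B) A /\ edge M e0 e1 (A :|: B) B) /\
    ((#|A|%:R > Delta ^+ 2 * #|B|%:R :> R) \/ (#|B|%:R > Delta ^+ 2 * #|A|%:R :> R) ->
       ~~ edge M e0 e1 A B).
Proof.
move=> hD hDn hyp A B hA hB; split.
- rewrite /edge /close /far supp_U !negb_or -!leqNgt => /andP [h1 h2] _.
  rewrite setDUl setDv set0U setDUl setDv setU0.
  have E : forall (X Y : {set 'I_m}), X :\: (X :|: Y) = set0.
    by move=> X Y; apply/setP => i; rewrite !inE; case: (i \in X); rewrite ?andbF.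
  have E' : forall (X Y : {set 'I_m}), X :\: (Y :|: X) = set0.
    by move=> X Y; rewrite setUC E.
  by rewrite E E' !cards0 h1 h2.
- rewrite /edge /close negbK => -[h|h].
  + by apply: hyp => //; apply: cmp_le h.
  + by rewrite far_sym; apply: hyp => //; apply: cmp_le h.
Qed.
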